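(* Let $C>0$. There is a constant $C_1>0$ depending only on $C$ such that for any two mostly horizontal inclined to the right lines $l$ and $k$ with different slopes $a$ and $b$, $$N\bigl(s(l,C)\cap s(k,C)\bigr)\leqslant\frac{C_1}{|a-b|}.$$
   Context: For a line $l\subset\mathbb{R}^2$ and $C>0$, the $C$-strip is $s(l,C)=\{r\in\mathbb{R}^2\mid\rho(r,l)\leqslant C/2\}$, $\rho$ the Euclidean distance. A line is mostly horizontal inclined to the right if it has equation $y=ax+b$ with slope $0\leqslant a\leqslant1$. For $D\subseteq\mathbb{R}^2$, the integer cardinality is $N(D)=|\mathbb{Z}^2\cap D|$. *)

(* Defs.v *)
From Stdlib Require Import Reals List ZArith.
From Coquelicot Require Import Coquelicot.
Open Scope R_scope.

Definition eucl (p q : R * R) : R :=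
  sqrt ((fst p - fst q) ^ 2 + (snd p - snd q) ^ 2).

Definition line (a c : R) (q : R * R) : Prop := snd q = a * fst q + c.

Definition dist_line (a c : R) (r : R * R) : R :=
  real (Glb_Rbar (fun d => exists q, line a c q /\ d = eucl r q)).

Definition strip (a c C : R) (r : R * R) : Prop := dist_line a c r <= C / 2.

Definition ZZ (z : Z * Z) : R * R := (IZR (fst z), IZR (snd z)).

(* "N(D) <= M": every finite family of distinct integer points of D has at
   most M elements (i.e. |Z^2 ∩ D| <= M, in particular it is finite). *)
Definition N_le (D : R * R -> Prop) (M : R) : Prop :=
  forall L : list (Z * Z), NoDup L -> (forall z, In z L -> D (ZZ z)) ->
    INR (length L) <= M.

(* Main.v *)
Require Import Defs.
From Stdlib Require Import Reals List ZArith.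
From Coquelicot Require Import Coquelicot.
From Stdlib Require Import Lra Lia Psatz.
Open Scope R_scope.

Lemma strip_bound a c C x y : 0 <= a <= 1 -> strip a c C (x, y) ->
  Rabs (y - a * x - c) <= C.
Proof.
  intros Ha H. unfold strip, dist_line in H.
  set (E := fun d => exists q, line a c q /\ d = eucl (x, y) q) in H.
  set (s := Rabs (y - a * x - c) / 2).
  assert (Hs0 : 0 <= s) by (unfold s; pose proof (Rabs_pos (y - a*x - c)); lra).
  assert (lb : forall e, E e -> s <= e).
  { intros e [[q1 q2] [Hl ->]]. unfold line in Hl; simpl in Hl.
    unfold eucl; simpl. rewrite <- (sqrt_pow2 s Hs0). apply sqrt_le_1_alt.
    unfold s. replace ((Rabs (y - a*x - c) / 2)^2) with ((Rabs (y - a*x - c))^2 / 4) by field.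
    rewrite pow2_abs. subst q2.
    replace (y - a*x - c) with ((y - (a*q1 + c)) - a*(x - q1)) by ring.
    set (u := x - q1). set (v := y - (a*q1+c)).
    clearbody u v. clear -Ha.
    assert (h1 : 0 <= (v + a*u)^2) by apply pow2_ge_0.
    assert (h2 : 0 <= (1 - a*a) * (u*u)) by (apply Rmult_le_pos; nra).
    nra. }
  assert (E0 : E (Rabs (y - a*x - c))).
  { exists (x, a*x + c). split. reflexivity. unfold eucl; simpl.
    replace (x - x) with 0 by ring. rewrite <- sqrt_Rsqr_abs. unfold Rsqr. f_equal. ring. }
  destruct (Glb_Rbar_correct E) as [H1 H2].
  destruct (Glb_Rbar E) as [r| |] eqn:Hg; simpl in H.
  - assert (Rbar_le s r) by (apply H2; intros e He; simpl; apply lb; auto).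
    simpl in H0. unfold s in H0. lra.
  - specialize (H1 _ E0). simpl in H1. contradiction.
  - assert (Rbar_le s m_infty) by (apply H2; intros e He; simpl; apply lb; auto).
    simpl in H0. contradiction.
Qed.

Lemma ints_in (u w : R) : 0 <= w -> exists l : list Z,
  INR (length l) <= w + 2 /\ forall z, u <= IZR z <= u + w -> In z l.
Proof.
  intros Hw.
  destruct (archimed u) as [A1 A2]. destruct (archimed (u + w)) as [B1 B2].
  set (n := Z.to_nat (up (u+w) - up u + 1)).
  exists (map (fun i => (up u - 1 + Z.of_nat i)%Z) (seq 0 n)). split.
  - rewrite length_map, length_seq. unfold n.
    assert (Hlt : (up u - 1 < up (u+w))%Z).
    { apply lt_IZR. rewrite minus_IZR. change (IZR 1) with 1. lra. }
    rewrite INR_IZR_INZ, Z2Nat.id by lia.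
    rewrite plus_IZR, minus_IZR. change (IZR 1) with 1. lra.
  - intros z [Hz1 Hz2]. apply in_map_iff.
    assert (Ha : (up u - 1 <= z)%Z).
    { apply le_IZR; rewrite minus_IZR; change (IZR 1) with 1; lra. }
    assert (Hb : (z < up (u+w))%Z) by (apply lt_IZR; lra).
    exists (Z.to_nat (z - (up u - 1))). split. lia.
    apply in_seq. unfold n. lia.
Qed.

Theorem lemma2 :
  forall C : R, 0 < C ->
  exists C1 : R, 0 < C1 /\
    forall a c b d : R,
      0 <= a <= 1 -> 0 <= b <= 1 -> a <> b ->
      N_le (fun r => strip a c C r /\ strip b d C r) (C1 / Rabs (a - b)).
Proof.
  intros C HC. exists ((4*C+2)*(2*C+3)). split; [nra|].
  intros a c b d Ha Hb Hab L HL HD.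
  assert (Hne : a - b <> 0) by lra.
  set (δ := Rabs (a - b)).
  assert (Hd0 : 0 < δ) by (apply Rabs_pos_lt; auto).
  assert (Hd1 : δ <= 1) by (unfold δ; apply Rabs_le_between; lra).
  set (K := 2*C/δ).
  assert (HK : 0 <= K) by (unfold K; apply Rmult_le_pos; [lra | left; apply Rinv_0_lt_compat; lra]).
  destruct (ints_in (-(c-d)/(a-b) - K) (2*K)) as [l1 [Hl1 Hin1]]; [lra|].
  destruct (ints_in (-1) (2*C+1)) as [l2 [Hl2 Hin2]]; [lra|].
  set (g := fun x : Z => up (a * IZR x + c - C)).
  set (l' := map (fun p => (fst p, (snd p + g (fst p))%Z)) (list_prod l1 l2)).
  assert (Hincl : incl L l').
  { intros [x y] Hin. destruct (HD _ Hin) as [S1 S2]. unfold ZZ in S1, S2; simpl in S1, S2.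
    apply strip_bound in S1; auto. apply strip_bound in S2; auto.
    apply in_map_iff. exists (x, (y - g x)%Z). split. simpl; f_equal; ring.
    apply in_prod.
    - apply Hin1.
      assert (H : Rabs (IZR x + (c-d)/(a-b)) <= K).
      { replace (IZR x + (c-d)/(a-b)) with (((a-b)*IZR x + (c-d))/(a-b)) by (field; auto).
        rewrite Rabs_div by auto. fold δ. unfold K, Rdiv.
        apply Rmult_le_compat_r. left; apply Rinv_0_lt_compat; lra.
        replace ((a-b)*IZR x + (c-d)) with ((IZR y - b*IZR x - d) - (IZR y - a*IZR x - c)) by ring.
        unfold Rminus at 1. eapply Rle_trans. apply Rabs_triang. rewrite Rabs_Ropp. lra. }
      apply Rabs_le_between in H. unfold Rdiv in *. lra.
    - apply Hin2. unfold g. destruct (archimed (a * IZR x + c - C)) as [A1 A2].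
      apply Rabs_le_between in S1.
      rewrite minus_IZR. lra. }
  apply NoDup_incl_length in Hincl; auto.
  unfold l' in Hincl. rewrite length_map, length_prod in Hincl.
  apply le_INR in Hincl. rewrite mult_INR in Hincl.
  assert (Hpos1 : 0 <= INR (length l1)) by apply pos_INR.
  assert (Hpos2 : 0 <= INR (length l2)) by apply pos_INR.
  set (t := / δ).
  assert (Ht : 1 <= t) by (unfold t; rewrite <- Rinv_1; apply Rinv_le_contravar; lra).
  assert (HKt : K = 2*C*t) by (unfold K, t; reflexivity).
  unfold Rdiv. fold δ. fold t.
  assert (INR (length l1) * INR (length l2) <= (2*K+2)*(2*C+3)).
  { apply Rmult_le_compat; lra. }
  nra.
Qed.
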